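(* For every $1\le i\le n$ and $1\le j\le n-1$, the elements $\tau_i$ and $\sigma_i$ of $\hat\Lambda$ are invariant under $s_j$ (exchange of $a_j$ and $a_{j+1}$ in the coefficients).
   Context: Fix $n\ge2$. $R(T)=\mathbb{Z}[e^{\pm a_1},\dots,e^{\pm a_n}]/(e^{a_1+\cdots+a_n}-1)$, $b_i=1-e^{-a_i}$. $\hat\Lambda$: symmetric formal power series in $y=(y_1,y_2,\dots)$ with coefficients in the fraction field of $R(T)$; $\Omega(b_i|y)=\prod_{j\ge1}(1-b_iy_j)^{-1}$. $Z=(z_{pq})$ is the $n\times n$ upper triangular matrix with $z_{pp}=\Omega(b_p|y)$ and $z_{pq}=\frac{z_{p,q-1}-z_{p+1,q}}{e^{-a_q}-e^{-a_p}}$ for $p<q$. $A$: upper triangular with diagonal $(e^{-a_1},\dots,e^{-a_n})$, $-1$ on the superdiagonal, $0$ elsewhere. $P$: lower unitriangular with $P_{pq}=e_{p-q}(e^{-a_1},\dots,e^{-a_{p-1}})$. $\sigma_i=\det(ZP)_{[1,i]}^{[1,i]}$, $\tau_i=\det(ZAP)_{[1,i]}^{[1,i]}$ (leading principal minors). *)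

(* Defs.v *)
From HB Require Import structures.
From mathcomp Require Import all_boot all_order all_algebra.
From mathcomp Require Import fraction.
From mathcomp Require Import mpoly.
Set Implicit Arguments. Unset Strict Implicit. Unset Printing Implicit Defensive.
Import GRing.Theory.
Local Open Scope ring_scope.

(* All indices below are 0-based: paper's index p (1 <= p <= n) is p-1 here.
   x k stands for e^{-a_{k+1}}, y k for y_{k+1}.
   The construction is written generically over any field F. *)
Section Construction.
Variable F : fieldType.

Definition bb (x : nat -> F) (p : nat) : F := 1 - x p.

Definition Om (m : nat) (x y : nat -> F) (p : nat) : F :=
  \prod_(k < m) (1 - bb x p * y k)^-1.

(* zd d p = z_{p, p+d} *)
Fixpoint zd (m : nat) (x y : nat -> F) (d p : nat) : F :=
  match d with
  | 0 => Om m x y p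
  | d'.+1 => (zd m x y d' p - zd m x y d' p.+1) / (x (p + d'.+1)%N - x p)
  end.

Definition Zm (m : nat) (x y : nat -> F) (p q : nat) : F :=
  if (p <= q)%N then zd m x y (q - p) p else 0.

Definition Am (x : nat -> F) (p q : nat) : F :=
  if p == q then x p else if q == p.+1 then -1 else 0.

Definition esymF (x : nat -> F) (k l : nat) : F :=
  \sum_(I : {set 'I_l} | #|I| == k) \prod_(i in I) x i.

Definition Pm (x : nat -> F) (p q : nat) : F :=
  if (q <= p)%N then esymF x (p - q) p else 0.

Definition mxmulN (n : nat) (M N : nat -> nat -> F) (p q : nat) : F :=
  \sum_(k < n) M p k * N k q.

Definition lead_minor (M : nat -> nat -> F) (i : nat) : F :=
  \det (\matrix_(r < i, c < i) M r c).

Definition sigmaF (n m : nat) (x y : nat -> F) (i : nat) : F :=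
  lead_minor (mxmulN n (Zm m x y) (Pm x)) i.

Definition tauF (n m : nat) (x y : nat -> F) (i : nat) : F :=
  lead_minor (mxmulN n (mxmulN n (Zm m x y) (Am x)) (Pm x)) i.

(* s_j (1-based j): exchange of a_j and a_{j+1}, i.e. of x_{j-1} and x_j *)
Definition swapx (j : nat) (x : nat -> F) (k : nat) : F :=
  if k == j.-1 then x j else if k == j then x j.-1 else x k.
End Construction.

(* The generic field: Frac(R(T)) (y_1..y_m) = Q(x_1..x_{n-1}, y_1..y_m),
   realized as the fraction field of {mpoly int[(n-1)+m]}. *)
Definition GF (n m : nat) := {fraction {mpoly int[n.-1 + m]}}.

Definition mvar (N : nat) (k : nat) : {mpoly int[N]} :=
  if insub k is Some i then 'X_i else 0.

(* generic x: x_k = e^{-a_{k+1}} is the variable k for k < n-1, and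
   x_{n-1} = (x_0 ... x_{n-2})^{-1}, enforcing e^{a_1+...+a_n} = 1 *)
Definition genx (n m : nat) (k : nat) : GF n m :=
  if (k < n.-1)%N then FracField.tofrac (mvar (n.-1 + m) k)
  else (\prod_(l < n.-1) FracField.tofrac (mvar (n.-1 + m) l))^-1.

Definition geny (n m : nat) (k : nat) : GF n m :=
  FracField.tofrac (mvar (n.-1 + m) (n.-1 + k)).

(* Main.v *)
Require Import Defs.
From HB Require Import structures.
From mathcomp Require Import all_boot all_order all_algebra.
From mathcomp Require Import fraction.
From mathcomp Require Import mpoly.
From mathcomp Require Import ring zify.
Set Implicit Arguments. Unset Strict Implicit. Unset Printing Implicit Defensive.
Import GRing.Theory.
Local Open Scope ring_scope.

Section Gen.
Variable F : fieldType.

Lemma sum_delta (i a : nat) (g : nat -> F) :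
  \sum_(k < i) (a == k)%:R * g k = (a < i)%:R * g a.
Proof.
case: (ltnP a i) => h.
  rewrite (bigD1 (Ordinal h)) //= eqxx mul1r big1 ?addr0 ?mul1r // => k /eqP hk.
  case: eqP => [e|]; last by rewrite mul0r.
  by exfalso; apply: hk; apply: val_inj.
rewrite mul0r big1 // => k _.
have : (k < a)%N by apply: leq_trans (ltn_ord k) h.
by rewrite ltn_neqAle => /andP[/negPf]; rewrite eq_sym => ->; rewrite mul0r.
Qed.

Lemma lead_minor_rowadd (f g : nat -> nat -> F) (n s t i : nat) (d : F) :
  (forall p q, (p < n)%N -> (q < n)%N -> g p q = f p q + (p == t)%:R * d * f s q) ->
  (s < t)%N -> (i <= n)%N -> lead_minor g i = lead_minor f i.
Proof.
move=> hg hst hin; rewrite /lead_minor.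
case: (ltnP t i) => hti; last first.
  congr (\det _); apply/matrixP => r c; rewrite !mxE hg.
  - have : r != t :> nat by rewrite neq_ltn (leq_trans (ltn_ord r) hti).
    by move/negPf => ->; rewrite mul0r mul0r addr0.
  - exact: leq_trans (ltn_ord r) hin.
  - exact: leq_trans (ltn_ord c) hin.
pose Lm : 'M[F]_i := \matrix_(r < i, c < i) ((r == c :> nat)%:R + ((r == t :> nat) && (c == s :> nat))%:R * d).
have -> : (\matrix_(r < i, c < i) g r c) = Lm *m \matrix_(r < i, c < i) f r c.
  apply/matrixP => r c; rewrite !mxE hg; last 2 first.
  - exact: leq_trans (ltn_ord r) hin.
  - exact: leq_trans (ltn_ord c) hin.
  rewrite (eq_bigr (fun k : 'I_i => (r == k :> nat)%:R * f k c +
       (s == k)%:R * (((r == t :> nat)%:R * d) * f s c))); last first.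
    move=> k _; rewrite !mxE mulrDl; congr (_ + _).
    case: (eqVneq (k : nat) s) => [hk|hk].
      by rewrite andbT mul1r hk.
    by rewrite andbF !mul0r.
  rewrite big_split /= (sum_delta i r (fun k => f k c)) (ltn_ord r) mul1r.
  rewrite (eq_bigr (fun k : 'I_i => (s == k)%:R * ((r == t :> nat)%:R * d * f s c))) //.
  by rewrite (sum_delta i s (fun _ => (r == t :> nat)%:R * d * f s c)) (ltn_trans hst hti) mul1r.
rewrite det_mulmx det_trig; last first.
  apply/is_trig_mxP => r c hrc; rewrite mxE.
  rewrite (ltn_eqF hrc) add0r.
  case: (eqVneq (r : nat) t) => [hr|]; last by rewrite mul0r.
  case: (eqVneq (c : nat) s) => [hc|]; last by rewrite andbF mul0r.
  by exfalso; move: hrc hst; rewrite hr hc => /ltn_trans h /h; rewrite ltnn.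
rewrite big1 ?mul1r // => r _; rewrite mxE eqxx.
case: (eqVneq (r : nat) t) => [hr|]; last by rewrite mul0r addr0.
by rewrite hr (gtn_eqF hst) mul0r addr0.
Qed.

Definition mxn (n : nat) (f : nat -> nat -> F) : 'M[F]_n := \matrix_(p < n, q < n) f p q.

Lemma mxn_mul n (M N : nat -> nat -> F) : mxn n (mxmulN n M N) = mxn n M *m mxn n N.
Proof. by apply/matrixP => p q; rewrite !mxE; apply: eq_bigr => k _; rewrite !mxE. Qed.

Lemma mxnP n (f g : nat -> nat -> F) :
  mxn n f = mxn n g -> forall p q, (p < n)%N -> (q < n)%N -> f p q = g p q.
Proof.
by move=> /matrixP h p q hp hq; have := h (Ordinal hp) (Ordinal hq); rewrite !mxE.
Qed.

Lemma mxn_ext n (f g : nat -> nat -> F) :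
  (forall p q, (p < n)%N -> (q < n)%N -> f p q = g p q) -> mxn n f = mxn n g.
Proof. by move=> h; apply/matrixP => p q; rewrite !mxE h. Qed.

Definition Lf (s t : nat) (d : F) (p q : nat) : F :=
  (p == q)%:R + ((p == t) && (q == s))%:R * d.

Lemma mulL_l n s t d (M : nat -> nat -> F) : (s < n)%N ->
  mxn n (Lf s t d) *m mxn n M = mxn n (fun p q => M p q + (p == t)%:R * d * M s q).
Proof.
move=> hs; apply/matrixP => p q; rewrite !mxE.
rewrite (eq_bigr (fun k : 'I_n => (p == k :> nat)%:R * M k q +
       (s == k)%:R * ((p == t :> nat)%:R * d * M s q))); last first.
  move=> k _; rewrite !mxE /Lf mulrDl; congr (_ + _).
  case: (eqVneq (k : nat) s) => [hk|hk]; first by rewrite andbT mul1r hk mulrAC.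
  by rewrite andbF !mul0r.
rewrite big_split /= (sum_delta n p (fun k => M k q)) (ltn_ord p) mul1r.
by rewrite (sum_delta n s (fun _ => (p == t :> nat)%:R * d * M s q)) hs mul1r.
Qed.

Lemma mulL_r n s t d (M : nat -> nat -> F) : (t < n)%N ->
  mxn n M *m mxn n (Lf s t d) = mxn n (fun p q => M p q + (q == s)%:R * d * M p t).
Proof.
move=> ht; apply/matrixP => p q; rewrite !mxE.
rewrite (eq_bigr (fun k : 'I_n => (q == k :> nat)%:R * M p k +
       (t == k)%:R * ((q == s :> nat)%:R * d * M p t))); last first.
  move=> k _; rewrite !mxE /Lf mulrDr; congr (_ + _).
    by rewrite mulrC eq_sym.
  case: (eqVneq (k : nat) t) => [hk|hk]; last by rewrite mulrC !mul0r.
  by rewrite mul1r mulrC hk.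
rewrite big_split /= (sum_delta n q (fun k => M p k)) (ltn_ord q) mul1r.
by rewrite (sum_delta n t (fun _ => (q == s :> nat)%:R * d * M p t)) ht mul1r.
Qed.

Lemma mulA_r n (x : nat -> F) (M : nat -> nat -> F) :
  mxn n M *m mxn n (Am x) = mxn n (fun p q => M p q * x q - (0 < q)%:R * M p q.-1).
Proof.
apply/matrixP => p q; rewrite !mxE.
rewrite (eq_bigr (fun k : 'I_n => (q == k :> nat)%:R * (M p k * x k) -
       (0 < q)%:R * ((q.-1 == k)%:R * M p k))); last first.
  move=> k _; rewrite !mxE /Am.
  case: (eqVneq (k : nat) q) => [hk|hk].
    rewrite mul1r hk; case: (nat_of_ord q) => [|q'] /=; first by rewrite mul0r subr0.
    by rewrite (ltn_eqF (ltnSn q')) mul0r mulr0 subr0.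
  rewrite mul0r sub0r.
  case: (eqVneq (q : nat) k.+1) => [hq|hq].
    rewrite hq; have -> : (k.+1.-1 == k) = true by apply/eqP.
    by rewrite mulrN1 /= !mul1r.
  rewrite mulr0; case: (nat_of_ord q) hq => [|q'] hq /=; first by rewrite mul0r oppr0.
  by rewrite eqSS in hq; rewrite (negPf hq) !mul0r mulr0 oppr0.
rewrite sumrB /= (sum_delta n q (fun k => M p k * x k)) (ltn_ord q) mul1r.
rewrite -mulr_sumr (sum_delta n q.-1 (fun k => M p k)).
by rewrite (leq_ltn_trans (leq_pred q) (ltn_ord q)) mul1r.
Qed.

Lemma mulA_l n (x : nat -> F) (M : nat -> nat -> F) :
  mxn n (Am x) *m mxn n M = mxn n (fun p q => x p * M p q - (p.+1 < n)%:R * M p.+1 q).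
Proof.
apply/matrixP => p q; rewrite !mxE.
rewrite (eq_bigr (fun k : 'I_n => (p == k :> nat)%:R * (x k * M k q) -
       (p.+1 == k)%:R * M k q)); last first.
  move=> k _; rewrite !mxE /Am.
  case: (eqVneq (p : nat) k) => [hk|hk].
    by rewrite hk mul1r (gtn_eqF (ltnSn k)) mul0r subr0.
  rewrite mul0r sub0r eq_sym.
  case: (eqVneq (p.+1) (k : nat)) => [hq|hq]; first by rewrite mul1r mulN1r.
  by rewrite /=; ring.
by rewrite sumrB /= (sum_delta n p (fun k => x k * M k q)) (ltn_ord p) mul1r
  (sum_delta n p.+1 (fun k => M k q)).
Qed.

Lemma Zm_lt0 m (x y : nat -> F) p q : (q < p)%N -> Zm m x y p q = 0.
Proof. by move=> h; rewrite /Zm leqNgt h. Qed.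

Lemma Zm_rec m (x y : nat -> F) p q : (p < q)%N -> x q != x p ->
  Zm m x y p q * (x q - x p) = Zm m x y p q.-1 - Zm m x y p.+1 q.
Proof.
move=> hpq hx.
have [d hd] : exists d, q = (p + d.+1)%N by exists (q - p.+1)%N; rewrite addnS -addSn subnKC.
move: hx; rewrite hd /Zm => hx.
rewrite leq_addr addnS /= leq_addr ltnS leq_addr.
rewrite subSS -addSn !addKn addSn /=.
rewrite subSn ?leq_addr // addKn /= -addnS divfK // subr_eq0. exact: hx. Qed.

Lemma ZA_comm n m (x y : nat -> F) :
  (forall a b, (a < n)%N -> (b < n)%N -> a != b -> x a != x b) ->
  mxn n (Zm m x y) *m mxn n (Am x) = mxn n (Am x) *m mxn n (Zm m x y).
Proof.
move=> hx; rewrite mulA_r mulA_l; apply: mxn_ext => p q hp hq.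
case: (ltngtP p q) => hpq.
- rewrite (leq_ltn_trans (leq0n p) hpq) (leq_ltn_trans hpq hq) !mul1r.
  have := Zm_rec m y hpq (hx _ _ hq hp (negbT (gtn_eqF hpq))).
  move=> e.
  have -> : Zm m x y p q.-1 = Zm m x y p q * (x q - x p) + Zm m x y p.+1 q.
    by rewrite e subrK.
  ring.
- have h1 : Zm m x y p q = 0 by apply: Zm_lt0.
  have h2 : Zm m x y p q.-1 = 0 by apply: Zm_lt0; exact: leq_ltn_trans (leq_pred q) hpq.
  have h3 : Zm m x y p.+1 q = 0 by apply: Zm_lt0; exact: ltn_trans hpq (ltnSn p).
  rewrite h1 h2 h3; ring.
- have h3 : Zm m x y p.+1 q = 0 by apply: Zm_lt0; rewrite hpq.
  rewrite h3 -hpq; clear h3 hq hpq.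
  case: p hp => [|q'] hp /=; first by ring.
  have h : Zm m x y q'.+1 q' = 0 by apply: Zm_lt0.
  by rewrite h; ring.
Qed.

Lemma Am_ext (x x' : nat -> F) p q : (p = q -> x' p = x p) -> Am x' p q = Am x p q.
Proof. by rewrite /Am; case: eqP => // /[swap] /[apply] ->. Qed.

Lemma AL_comm n s (x x' : nat -> F) : (s.+1 < n)%N ->
  (forall k, x' k = if k == s then x s.+1 else if k == s.+1 then x s else x k) ->
  mxn n (Am x') *m mxn n (Lf s s.+1 (x s.+1 - x s)) =
  mxn n (Lf s s.+1 (x s.+1 - x s)) *m mxn n (Am x).
Proof.
move=> hn hx'.
rewrite mulL_r // mulL_l ?(ltn_trans (ltnSn s)) //; apply: mxn_ext => p q hp hq.
have xs : x' s = x s.+1 by rewrite hx' eqxx.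
have xt : x' s.+1 = x s by rewrite hx' (gtn_eqF (ltnSn s)) eqxx.
case: (eqVneq q s) => [->|hqs].
  case: (eqVneq p s) => [->|hps].
    rewrite /Am !eqxx (ltn_eqF (ltnSn s)) xs /=; ring.
  case: (eqVneq p s.+1) => [->|hpt].
    rewrite /Am !eqxx (gtn_eqF (ltnSn s)) xt.
    by [].
  rewrite /Am (negPf hps) (negPf hpt) eqSS (eq_sym s p) (negPf hps) /=; ring.
case: (eqVneq p s.+1) => [->|hpt].
  rewrite /Am xt eqxx (eq_sym s q) (negPf hqs) (eq_sym q s.+1).
  case: (eqVneq s.+1 q) => [hq1|hqt] /=; ring.
rewrite (@Am_ext x x' p q); last first.
  by move=> e; rewrite hx' e (negPf hqs) -e (negPf hpt).
by rewrite /= !mul0r.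
Qed.

Lemma Zss m (x y : nat -> F) p : Zm m x y p p = Om m x y p.
Proof. by rewrite /Zm leqnn subnn. Qed.

Lemma Zst m (x y : nat -> F) s :
  Zm m x y s s.+1 = (Om m x y s - Om m x y s.+1) / (x s.+1 - x s).
Proof. by rewrite /Zm leqnSn subSnn /= addn1. Qed.

Definition sw (s k : nat) : nat := if k == s then s.+1 else if k == s.+1 then s else k.

Lemma swK s k : sw s (sw s k) = k.
Proof.
rewrite /sw; case: (eqVneq k s) => [->|h1].
  by rewrite (gtn_eqF (ltnSn s)) eqxx.
case: (eqVneq k s.+1) => [->|h2]; first by rewrite eqxx.
by rewrite (negPf h1) (negPf h2).
Qed.

Lemma sw_lt n s k : (s.+1 < n)%N -> (k < n)%N -> (sw s k < n)%N.
Proof.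
move=> hs hk; rewrite /sw; case: ifP => _; first by [].
by case: ifP => _ //; exact: ltn_trans (ltnSn s) hs.
Qed.

Lemma Om_ext m (x x' y : nat -> F) k k' : x' k = x k' -> Om m x' y k = Om m x y k'.
Proof. by move=> h; rewrite /Om /bb h. Qed.

Lemma mxn_sub n (f g : nat -> nat -> F) :
  mxn n f - mxn n g = mxn n (fun p q => f p q - g p q).
Proof. by apply/matrixP => p q; rewrite !mxE. Qed.

Lemma ZL_comm n m s (x x' y : nat -> F) : (s.+1 < n)%N ->
  (forall k, x' k = x (sw s k)) ->
  (forall a b, (a < n)%N -> (b < n)%N -> a != b -> x a != x b) ->
  mxn n (Zm m x' y) *m mxn n (Lf s s.+1 (x s.+1 - x s)) =
  mxn n (Lf s s.+1 (x s.+1 - x s)) *m mxn n (Zm m x y).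
Proof.
move=> hn hx' hx.
have hsn : (s < n)%N by apply: ltn_trans (ltnSn s) hn.
have hx'i : forall a b, (a < n)%N -> (b < n)%N -> a != b -> x' a != x' b.
  move=> a b ha hb hab; rewrite !hx'; apply: hx; rewrite ?sw_lt //.
  by apply: contra hab => /eqP /(congr1 (sw s)); rewrite !swK => ->.
have hxst : x s.+1 - x s != 0.
  by rewrite subr_eq0; apply: hx => //; rewrite (gtn_eqF (ltnSn s)).
set d := x s.+1 - x s.
set L := mxn n (Lf s s.+1 d).
set Z := mxn n (Zm m x y).
set Z' := mxn n (Zm m x' y).
have AL : mxn n (Am x') *m L = L *m mxn n (Am x).
  by apply: AL_comm => // k; rewrite hx' /sw; do 2 case: ifP => //.
have YA : (Z' *m L - L *m Z) *m mxn n (Am x) = mxn n (Am x') *m (Z' *m L - L *m Z).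
  rewrite mulmxBl mulmxBr -!mulmxA -AL.
  rewrite /Z (ZA_comm m y hx) !mulmxA -/Z -AL.
  by rewrite /Z' -(ZA_comm m y hx'i).
pose yf p q := (Zm m x' y p q + (q == s)%:R * d * Zm m x' y p s.+1) -
               (Zm m x y p q + (p == s.+1)%:R * d * Zm m x y s q).
have Ye : Z' *m L - L *m Z = mxn n yf.
  by rewrite /Z' /L /Z mulL_r // mulL_l // mxn_sub.
rewrite Ye mulA_r mulA_l in YA.
have rec := mxnP YA.
have hOs : Om m x' y s = Om m x y s.+1 by apply: Om_ext; rewrite hx' /sw eqxx.
have hOt : Om m x' y s.+1 = Om m x y s.
  by apply: Om_ext; rewrite hx' /sw (gtn_eqF (ltnSn s)) eqxx.
have hxs : x' s = x s.+1 by rewrite hx' /sw eqxx.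
have hxt : x' s.+1 = x s by rewrite hx' /sw (gtn_eqF (ltnSn s)) eqxx.
have hst : yf s s.+1 = 0.
  rewrite /yf (gtn_eqF (ltnSn s)) (ltn_eqF (ltnSn s)) !Zst hOs hOt hxs hxt /=.
  rewrite !mul0r !addr0; apply/eqP; rewrite subr_eq0; apply/eqP.
  by rewrite -[Om m x y s.+1 - _]opprB -[x s - _]opprB invrN mulrN mulNr opprK.
have hxst' : x s - x s.+1 != 0 by rewrite -opprB oppr_eq0.
have hle : forall p q, (p < n)%N -> (q < n)%N -> (q <= p)%N -> yf p q = 0.
  move=> p q hp hq; rewrite leq_eqVlt => /orP [/eqP ->|hqp].
    case: (eqVneq p s) => [->|hps].
      rewrite /yf eqxx (ltn_eqF (ltnSn s)) !Zss Zst hOs hOt hxs hxt /= /d.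
      by field.
    case: (eqVneq p s.+1) => [->|hpt].
      rewrite /yf eqxx (gtn_eqF (ltnSn s)) !Zss Zst hOt /= /d.
      by field.
    rewrite /yf (negPf hps) (negPf hpt) !Zss (@Om_ext m x x' y p p); last first.
      by rewrite hx' /sw (negPf hps) (negPf hpt).
    by rewrite /= !mul0r !addr0 subrr.
  have h0 : Zm m x' y p q = 0 by apply: Zm_lt0.
  have h1 : Zm m x y p q = 0 by apply: Zm_lt0.
  rewrite /yf h0 h1 !add0r.
  case: (eqVneq q s) => [eq|hqs].
    move: hqp; rewrite eq => hqp.
    case: (eqVneq p s.+1) => [->|hpt].
      by rewrite !Zss hOt /= !mul1r subrr.
    have h2 : Zm m x' y p s.+1 = 0 by apply: Zm_lt0; rewrite ltn_neqAle eq_sym hpt hqp.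
    by rewrite h2 /= !mul0r mulr0 subrr.
  case: (eqVneq p s.+1) => [ep|hpt]; last by rewrite /= !mul0r subrr.
  have h2 : Zm m x y s q = 0.
    apply: Zm_lt0; move: hqp; rewrite ep ltnS leq_eqVlt (negPf hqs) //.
  by rewrite h2 /= !mul0r mulr0 subrr.
have key : forall k p q, (p < n)%N -> (q < n)%N -> (q - p <= k)%N -> yf p q = 0.
  elim=> [|k IH] p q hp hq hk.
    by apply: hle => //; rewrite -subn_eq0 -leqn0.
  case: (leqP q p) => hqp; first exact: hle.
  case: (boolP ((p == s) && (q == s.+1))) => [/andP [/eqP -> /eqP ->]|hne].
    exact: hst.
  have := rec p q hp hq.
  rewrite (leq_ltn_trans (leq0n p) hqp) (leq_ltn_trans hqp hq) /= !mul1r.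
  have hq1 : (q.-1 < n)%N by apply: leq_ltn_trans (leq_pred q) hq.
  rewrite (IH p q.-1) // ?(IH p.+1 q) //; last 3 first.
  - exact: leq_ltn_trans hqp hq.
  - by move: hk; lia.
  - by move: hk hqp; lia.
  rewrite !subr0 => e.
  have : yf p q * (x q - x' p) == 0 by rewrite mulrBr e mulrC subrr.
  rewrite mulf_eq0 => /orP [/eqP h|]; first exact: h.
  rewrite subr_eq0 => /eqP exq.
  exfalso; move: exq; rewrite hx' => /eqP; apply/negP; apply: hx => //.
    exact: sw_lt.
  rewrite /sw; case: (eqVneq p s) => [eps|hps].
    by move: hne; rewrite eps eqxx.
  case: (eqVneq p s.+1) => [ept|hpt]; last by rewrite gtn_eqF.
  by rewrite gtn_eqF // (ltn_trans _ hqp) // ept.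
apply/eqP; rewrite -subr_eq0 Ye; apply/eqP/matrixP => p q; rewrite !mxE.
apply: (key n) => //; exact: leq_trans (leq_subr p q) (ltnW (ltn_ord q)).
Qed.


Lemma esym_seq (ps : seq F) k : (k <= size ps)%N ->
  esymF (fun i => ps`_i) k (size ps) =
  (-1) ^+ k * (\prod_(z <- ps) ('X - z%:P))`_(size ps - k).
Proof.
move=> hk; rewrite coef_prod_XsubC ?leq_subr // subKn // mulrA -exprD.
rewrite -signr_odd oddD addbb expr0 mul1r /esymF.
by apply: eq_bigl => I.
Qed.

Definition Qp (x : nat -> F) (l : nat) : {poly F} :=
  \prod_(z <- map x (iota 0 l)) ('X - z%:P).

Lemma esymQ (x : nat -> F) k l : (k <= l)%N ->
  esymF x k l = (-1) ^+ k * (Qp x l)`_(l - k).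
Proof.
move=> hk; have := @esym_seq (map x (iota 0 l)) k.
rewrite size_map size_iota => <- //.
rewrite /esymF; apply: eq_bigr => I _; apply: eq_bigr => i _.
by rewrite (nth_map 0) ?size_iota // nth_iota.
Qed.

Lemma QpS (x : nat -> F) l : Qp x l.+1 = Qp x l * ('X - (x l)%:P).
Proof. by rewrite /Qp -addn1 iotaD map_cat big_cat /= big_seq1 add0n. Qed.

Lemma size_Qp (x : nat -> F) l : size (Qp x l) = l.+1.
Proof. by rewrite /Qp size_prod_XsubC size_map size_iota. Qed.

Lemma Qp_perm s (x : nat -> F) l : (s.+1 < l)%N ->
  Qp (fun k => x (sw s k)) l = Qp x l.
Proof.
move=> hl; rewrite /Qp; apply: perm_big.
have -> : map (fun k => x (sw s k)) (iota 0 l) = map x (map (sw s) (iota 0 l)).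
  by rewrite -map_comp.
apply: perm_map; apply: uniq_perm.
- by rewrite (map_inj_uniq (can_inj (swK s))) iota_uniq.
- exact: iota_uniq.
move=> a; rewrite -{1}(swK s a) (mem_map (can_inj (swK s))) !mem_iota /= !add0n.
apply/idP/idP => h.
  by rewrite -(swK s a); apply: sw_lt.
exact: sw_lt.
Qed.

Lemma PL n s (x : nat -> F) : (s.+1 < n)%N ->
  mxn n (Pm (fun k => x (sw s k))) =
  mxn n (Lf s s.+1 (x s.+1 - x s)) *m mxn n (Pm x).
Proof.
move=> hn; have hsn : (s < n)%N by apply: ltn_trans (ltnSn s) hn.
rewrite mulL_l //; apply: mxn_ext => p q hp hq.
case: (ltngtP p s.+1) => hps.
- rewrite mul0r mul0r addr0 /Pm; case: ifP => // _.
  rewrite /esymF; apply: eq_bigr => I _; apply: eq_bigr => i _.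
  have hi : (i < s)%N by apply: leq_trans (ltn_ord i) _; rewrite -ltnS.
  by rewrite /sw (ltn_eqF hi) (ltn_eqF (ltn_trans hi (ltnSn s))).
- rewrite mul0r mul0r addr0 /Pm; case: ifP => // hqp.
  by rewrite !esymQ ?leq_subr // Qp_perm.
rewrite hps /Pm.
have xs : x (sw s s) = x s.+1 by rewrite /sw eqxx.
have Qs : Qp (fun k => x (sw s k)) s = Qp x s.
  rewrite /Qp; congr (\prod_(z <- _) _); apply/eq_in_map => i.
  rewrite mem_iota add0n => /andP [_ hi].
  by rewrite /sw (ltn_eqF hi) (ltn_eqF (ltn_trans hi (ltnSn s))).
have hQ : forall r, (Qp (fun k => x (sw s k)) s.+1)`_r =
    (Qp x s.+1)`_r - (x s.+1 - x s) * (Qp x s)`_r.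
  move=> r; rewrite !QpS Qs xs.
  have -> : 'X - (x s.+1)%:P = ('X - (x s)%:P) - (x s.+1 - x s)%:P.
    by rewrite rmorphB /= opprB addrA subrK.
  by rewrite mulrBr coefB coefMC; congr (_ - _); exact: mulrC.
case: (leqP q s.+1) => hq1; last first.
  by rewrite leqNgt (ltn_trans (ltnSn s) hq1) /= mulr0 addr0.
case: (leqP q s) => hqs.
  rewrite !esymQ ?leq_subr // !subKn //.
  have e := hQ q; rewrite e.
  rewrite subSn // exprS mulN1r mul1r; set c := (-1) ^+ _.
  by rewrite mulrBr; congr (_ + _); rewrite mulNr opprK mulrCA.
have eq : (q = s.+1) by apply/eqP; rewrite eqn_leq hq1 hqs.
rewrite eq subnn !esymQ // subn0.
have e := hQ s.+1; rewrite e.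
by rewrite (@nth_default _ 0 (Qp x s)) ?size_Qp // mulr0 subr0 mulr0 addr0.
Qed.

Lemma Pm_ext (x x' : nat -> F) p q : (forall k, x' k = x k) -> Pm x' p q = Pm x p q.
Proof.
move=> h; rewrite /Pm /esymF; case: ifP => // _.
by apply: eq_bigr => I _; apply: eq_bigr => i _; rewrite h.
Qed.

End Gen.

Lemma mvarE N k (h : (k < N)%N) : mvar N k = 'X_(Ordinal h).
Proof.
rewrite /mvar; case: insubP => [i _ hi|]; last by rewrite h.
by rewrite (_ : i = Ordinal h) //; apply: val_inj.
Qed.

Lemma X_ne N (i j : 'I_N) : i != j -> ('X_i : {mpoly int[N]}) != 'X_j.
Proof.
move=> hij; apply/negP => /eqP e.
have := congr1 (meval (fun k => ((k == i)%:R : int))) e.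
by rewrite !mevalXU eqxx eq_sym (negPf hij).
Qed.

Lemma X_ne0 N (i : 'I_N) : ('X_i : {mpoly int[N]}) != 0.
Proof.
apply/negP => /eqP e.
have := congr1 (meval (fun k => (1 : int))) e.
by rewrite mevalXU raddf0.
Qed.

Lemma XP_ne1 N (i : 'I_N) (P : {mpoly int[N]}) : 'X_i * P != 1.
Proof.
apply/negP => /eqP e.
have := congr1 (meval (fun k => (0 : int))) e.
by rewrite mevalM mevalXU mul0r meval1.
Qed.

Lemma genx_inj n m : (2 <= n)%N -> forall a b, (a < n)%N -> (b < n)%N -> a != b ->
  genx n m a != genx n m b.
Proof.
move=> hn.
suff H : forall a b, (a < b)%N -> (b < n)%N -> genx n m a != genx n m b.
  move=> a b ha hb hab; case: (ltngtP a b) => h; first exact: H.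
    by rewrite eq_sym; apply: H.
  by rewrite h eqxx in hab.
move=> a b hab hb.
have ha : (a < n.-1)%N by lia.
have haN : (a < n.-1 + m)%N by lia.
rewrite /genx ha (mvarE haN).
case: (ltnP b n.-1) => hb1.
  have hbN : (b < n.-1 + m)%N by lia.
  rewrite (mvarE hbN) tofrac_eq; apply: X_ne.
  by rewrite -(inj_eq val_inj) /= neq_ltn hab.
set P := \prod_(l < n.-1) mvar (n.-1 + m) l.
have -> : \prod_(l < n.-1) FracField.tofrac (mvar (n.-1 + m) l) = FracField.tofrac P.
  by rewrite rmorph_prod.
apply/negP => /eqP e.
case: (eqVneq (FracField.tofrac P : {fraction {mpoly int[n.-1 + m]}}) 0) => hP.
  by move: e; rewrite hP invr0 => /eqP; rewrite tofrac_eq0 (negPf (X_ne0 _)).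
have : FracField.tofrac ('X_(Ordinal haN) * P) == 1 :> {fraction {mpoly int[n.-1 + m]}}.
  by rewrite rmorphM /= e mulVf.
by rewrite -tofrac1 tofrac_eq (negPf (XP_ne1 _ _)).
Qed.

Unset Implicit Arguments.

Theorem corollary5p3 (n : nat) (hn : (2 <= n)%N) (m i j : nat)
  (hi : (1 <= i <= n)%N) (hj : (1 <= j <= n.-1)%N) :
  sigmaF n m (swapx j (genx n m)) (geny n m) i = sigmaF n m (genx n m) (geny n m) i /\
  tauF n m (swapx j (genx n m)) (geny n m) i = tauF n m (genx n m) (geny n m) i.
Proof.
have hx := @genx_inj n m hn.
case: j hj => [|s] hj; first by [].
have hsn : (s.+1 < n)%N by move/andP: hj => [_ h]; lia.
have hin : (i <= n)%N by move/andP: hi => [_ h].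
set x := genx n m; set y := geny n m.
have hx' : forall k, swapx s.+1 x k = x (sw s k).
  by move=> k; rewrite /swapx /sw /=; case: ifP => //; case: ifP.
set x' := swapx s.+1 x.
set d := x s.+1 - x s.
set L := mxn n (Lf s s.+1 d).
have PL' : mxn n (Pm x') = L *m mxn n (Pm x).
  rewrite -PL //; apply: mxn_ext => p q _ _; exact: Pm_ext.
have ZL := ZL_comm m y hsn hx' hx.
have AL : mxn n (Am x') *m L = L *m mxn n (Am x).
  by apply: AL_comm => // k; rewrite hx' /sw; do 2 case: ifP => //.
rewrite /sigmaF /tauF; split.
- apply: (@lead_minor_rowadd _ _ _ n s s.+1 i d) => //.
  apply: mxnP.
  rewrite mxn_mul PL' mulmxA ZL -mulmxA -mxn_mul mulL_l //.
  exact: ltn_trans (ltnSn s) hsn.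
- apply: (@lead_minor_rowadd _ _ _ n s s.+1 i d) => //.
  apply: mxnP.
  rewrite -mulL_l; last exact: ltn_trans (ltnSn s) hsn.
  rewrite !mxn_mul PL' !mulmxA -(mulmxA _ _ L) AL mulmxA ZL.
  by [].
Qed.
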